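(* Let $n\geq 2$. The structure $(\mathbb{Q}^n,<,<_{\mathrm{lex}_1},\ldots,<_{\mathrm{lex}_n})$ is not ultrahomogeneous.
   Context: On $\mathbb{Q}^n$, $<$ is the product order ($\mathbf{a}<\mathbf{b}$ iff $a_i\leq b_i$ for all $i$ and $\mathbf{a}\neq\mathbf{b}$). For $i\leq n$, let $\sigma_i$ be the cyclic permutation of $\{1,\ldots,n\}$ listing $i,i+1,\ldots,n,1,\ldots,i-1$ (so $\sigma_i(1)=i$), and define the $i$th lexicographic order by $\mathbf{a}<_{\mathrm{lex}_i}\mathbf{b}$ iff there is $k\leq n$ with $a_{\sigma_i(j)}=b_{\sigma_i(j)}$ for all $j<k$ and $a_{\sigma_i(k)}<b_{\sigma_i(k)}$. A structure is ultrahomogeneous if every isomorphism between finite substructures (preserving and reflecting all relations) extends to an automorphism. *)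

(* Defs.v *)
From mathcomp Require Import all_boot all_order all_algebra.
Set Implicit Arguments. Unset Strict Implicit. Unset Printing Implicit Defensive.
Import Order.TTheory GRing.Theory Num.Theory.
Local Open Scope ring_scope.

(* Ultrahomogeneity: every isomorphism between finite substructures (given as a map f
   on a finite set A of points, injective on A, preserving and reflecting every
   relation between points of A; its image is the target substructure) extends to an
   automorphism (a bijection of V preserving and reflecting every relation). *)
Definition ultrahomogeneous (V : eqType) (I : Type) (R : I -> V -> V -> Prop) : Prop :=
  forall (A : seq V) (f : V -> V),
    {in A &, injective f} ->
    (forall i, {in A &, forall a b, R i a b <-> R i (f a) (f b)}) ->
    exists g : V -> V,
      [/\ bijective g,
          (forall i a b, R i a b <-> R i (g a) (g b)) &
          {in A, forall a, g a = f a}].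

(* Q^n, coordinates indexed by 'I_n (0-based: coordinate j stands for j+1). *)
Definition Qn (n : nat) := {ffun 'I_n -> rat}.

Definition prod_lt (n : nat) (a b : Qn n) : Prop :=
  (forall k : 'I_n, a k <= b k) /\ a != b.

Lemma sigma_proof (n : nat) (i : 'I_n) (j : nat) : ((i + j) %% n < n)%N.
Proof. by apply: ltn_pmod; apply: (leq_ltn_trans (leq0n i)) (ltn_ord i). Qed.

(* sigma i j : the cyclic permutation listing i, i+1, ..., n-1, 0, ..., i-1 (0-based);
   sigma i 0 = i. *)
Definition sigma (n : nat) (i j : 'I_n) : 'I_n := Ordinal (sigma_proof i j).

Definition lex_lt (n : nat) (i : 'I_n) (a b : Qn n) : Prop :=
  exists k : 'I_n,
    (forall j : 'I_n, (j < k)%N -> a (sigma i j) = b (sigma i j)) /\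
    a (sigma i k) < b (sigma i k).

(* The structure (Q^n, <, <_lex_1, ..., <_lex_n): index None is the product order,
   index Some i is the lexicographic order lex_{i+1}. *)
Definition Qn_rel (n : nat) (r : option 'I_n) : Qn n -> Qn n -> Prop :=
  match r with
  | None => @prod_lt n
  | Some i => @lex_lt n i
  end.

(* Main.v *)
Require Import Defs.
From mathcomp Require Import all_boot all_order all_algebra.
From mathcomp Require Import zify.
Set Implicit Arguments. Unset Strict Implicit. Unset Printing Implicit Defensive.
Import Order.TTheory GRing.Theory Num.Theory.
Local Open Scope ring_scope.

Lemma sigma_surj (n : nat) (i m : 'I_n) : exists j, sigma i j = m.
Proof.
have n0 : (0 < n)%N by apply: (leq_ltn_trans (leq0n i)) (ltn_ord i).
exists (Ordinal (ltn_pmod (m + (n - i)) n0)).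
apply: val_inj => /=.
rewrite modnDmr.
have -> : (i + (m + (n - i)) = m + n)%N by have := ltn_ord i; lia.
by rewrite modnDr modn_small.
Qed.

Lemma rel_irr (n : nat) r (x : Qn n) : ~ Qn_rel r x x.
Proof.
case: r => [i|] /=.
  by case=> k [_]; rewrite ltxx.
by case=> _; rewrite eqxx.
Qed.

Lemma le_rel (n : nat) (x y : Qn n) : (forall k, x k <= y k) -> x != y ->
  forall r, Qn_rel r x y /\ ~ Qn_rel r y x.
Proof.
move=> le neq [i|] /=; last first.
  split; first by split.
  case=> H _; move/eqP: neq; apply; apply/ffunP => k.
  by apply/le_anti; rewrite le H.
split; last first.
  by case=> k [_]; rewrite ltNge le.
have [m Hm] : exists m, x m != y m.
  apply/existsP; rewrite -negb_forall; apply: contra neq => /forallP H.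
  by apply/eqP/ffunP => k; apply/eqP.
have [j0 Hj0] := sigma_surj i m.
pose P := fun j : 'I_n => x (sigma i j) != y (sigma i j).
have Pj0 : P j0 by rewrite /P Hj0.
case: (arg_minnP (fun j : 'I_n => val j) Pj0) => k Pk Hmin.
exists k; split.
  move=> j ltjk; apply/eqP; apply: contraT => Pj.
  by have := Hmin j Pj; rewrite leqNgt ltjk.
by rewrite lt_neqAle le andbT; exact: Pk.
Qed.

Theorem proposition3p4 (n : nat) (hn : (2 <= n)%N) :
  ~ ultrahomogeneous (@Qn_rel n).
Proof.
have n0 : (0 < n)%N by apply: ltnW.
pose i0 : 'I_n := Ordinal n0.
pose i1 : 'I_n := Ordinal hn.
pose a : Qn n := [ffun _ => 0].
pose b : Qn n := [ffun k => if k == i0 then 1 else 0].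
pose b' : Qn n := [ffun _ => 2%:R].
pose c' : Qn n := [ffun k => if k == i0 then -1 else 1].
pose f := fun x : Qn n => if x == b' then b else x.
have ab' : a != b'.
  by apply/eqP => /ffunP /(_ i0); rewrite !ffunE.
have ab : a != b.
  by apply/eqP => /ffunP /(_ i0); rewrite !ffunE eqxx.
have leab : forall k, a k <= b k by move=> k; rewrite !ffunE; case: ifP.
have leab' : forall k, a k <= b' k by move=> k; rewrite !ffunE.
have fa : f a = a by rewrite /f (negbTE ab').
have fb' : f b' = b by rewrite /f eqxx.
move/(_ [:: a; b'] f) => [].
- move=> x y; rewrite !inE => /orP[] /eqP -> /orP[] /eqP -> //;
    rewrite fa fb' => E.
    + by move: ab; rewrite E eqxx.
    + by move: ab; rewrite E eqxx.
- move=> r x y; rewrite !inE => /orP[] /eqP -> /orP[] /eqP ->;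
    rewrite ?fa ?fb'.
  + by split => /rel_irr [].
  + have [H1 _] := le_rel leab' ab' r; have [H2 _] := le_rel leab ab r; tauto.
  + have [_ H1] := le_rel leab' ab' r; have [_ H2] := le_rel leab ab r; tauto.
  + by split => /rel_irr [].
move=> g [_ Hg Hgf].
have ga : g a = a by rewrite Hgf ?inE ?eqxx.
have gb' : g b' = b by rewrite Hgf ?inE ?eqxx ?orbT.
have s00 : sigma i0 i0 = i0 by apply: val_inj; rewrite /= modn_small.
have s10 : sigma i1 i0 = i1 by apply: val_inj; rewrite /= modn_small.
have H0 : Qn_rel (Some i0) c' a.
  exists i0; split => // ; rewrite s00 !ffunE eqxx; by [].
have H1 : Qn_rel (Some i1) a c'.
  exists i0; split => // ; rewrite s10 !ffunE; by [].
have H2 : Qn_rel (Some i1) c' b'.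
  exists i0; split => // ; rewrite s10 !ffunE; by [].
move: H0 H1 H2; rewrite !(Hg _ c') !(Hg _ a c') ga gb'.
set c := g c'.
move=> /= [k0 [E0 L0]] [k1 [E1 L1]] [k2 [E2 L2]].
have ci0 : c i0 <= 0.
  case: (posnP k0) => [k00|k0pos].
    have -> : i0 = sigma i0 k0 by apply: val_inj; rewrite /= k00 modn_small.
    by move: L0; rewrite ffunE => /ltW.
  by have := E0 i0 k0pos; rewrite s00 ffunE => ->.
have bpos : forall k, 0 < b (sigma i1 k) -> k = n.-1 :> nat.
  move=> k; rewrite ffunE; case: eqP => [E _|]; last by rewrite ltxx.
  move: (congr1 val E) => /=.
  have := ltn_ord k; case: (ltngtP (1 + k) n) => Hk Hkn.
  - by rewrite modn_small.
  - lia.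
  - lia.
have kb : forall k : 'I_n, k = n.-1 :> nat -> sigma i1 k = i0.
  move=> k Ek; apply: val_inj => /=; rewrite Ek.
  have -> : (1 + n.-1 = n)%N by lia.
  by rewrite modnn.
case: (ltngtP k1 k2) => Hk.
- have E := E2 k1 Hk.
  have : 0 < b (sigma i1 k1) by rewrite -E; move: L1; rewrite ffunE.
  move=> /bpos Ek1.
  have := ltn_ord k2; lia.
- have E := E1 k2 Hk.
  have : 0 < b (sigma i1 k2) by move: L2; rewrite -E ffunE.
  move=> /bpos Ek2.
  have := ltn_ord k1; lia.
- have Ek : k1 = k2 by apply: val_inj.
  subst k2.
  have : 0 < b (sigma i1 k1) by move: (lt_trans L1 L2); rewrite ffunE.
  move=> /bpos Ek.
  move: L1; rewrite (kb _ Ek) ffunE => L1.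
  by move: ci0; rewrite leNgt L1.
Qed.
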